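(* For $m\ge2$, the class of additive valuations on $[m]$ is pointwise $2(\log_2(m-1)+1)$-approximated by the class of constraint-homogeneous valuations: for every additive valuation $v$ and every nonempty $S\subseteq[m]$ there is a constraint-homogeneous valuation $v'$ with $2(\log_2(m-1)+1)\,v'(S)\ge v(S)$ and $v'(T)\le v(T)$ for all $T\subseteq[m]$.
   Context: A valuation $v$ on $2^{[m]}$ is additive if $v(T)=\sum_{j\in T}v_j$ for nonnegative numbers $v_j$. A valuation is constraint-homogeneous with interest set $S'$ and per-unit value $\hat v\ge0$ if $v(T)=\hat v|T\cap S'|$ for all $T\subseteq[m]$. A class $V$ is pointwise $\beta$-approximated by a class $V'$ if for every $v\in V$ and every $S\subseteq[m]$ there exists $v'\in V'$ (possibly depending on $S$) with $\beta v'(S)\ge v(S)$ and $v(T)\ge v'(T)$ for all $T\subseteq[m]$. *)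

(* Defs.v *)
From mathcomp Require Import all_boot.
From Stdlib Require Import Reals.
Set Implicit Arguments. Unset Strict Implicit. Unset Printing Implicit Defensive.

Open Scope R_scope.

Definition log2 (x : R) : R := ln x / ln 2.

Definition valuation (m : nat) := {set 'I_m} -> R.

Definition is_additive (m : nat) (v : valuation m) : Prop :=
  exists w : 'I_m -> R, (forall j, 0 <= w j) /\
    forall T : {set 'I_m}, v T = \big[Rplus/0]_(j in T) w j.

Definition is_constraint_homogeneous (m : nat) (v : valuation m) : Prop :=
  exists (S' : {set 'I_m}) (vh : R), 0 <= vh /\
    forall T : {set 'I_m}, v T = vh * INR #|T :&: S'|.

(* Main.v *)
Require Import Defs.
From HB Require Import structures.
From mathcomp Require Import all_boot.
From Stdlib Require Import Reals Lra.
Open Scope R_scope.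

Fixpoint H (n : nat) : R := match n with O => 0 | S k => H k + / INR (S k) end.

Lemma HS (n : nat) : H n.+1 = H n + / INR n.+1. Proof. by []. Qed.

Lemma H_ge0 (n : nat) : 0 <= H n.
Proof. elim: n => [|n IH]; first by rewrite /=; lra. rewrite HS.
have := pos_INR n; rewrite S_INR => h.
have : 0 < / (INR n + 1) by apply: Rinv_0_lt_compat; lra. lra. Qed.

Lemma H_mono (n k : nat) : (n <= k)%nat -> H n <= H k.
Proof. move=> /subnKC <-; elim: (k - n)%nat => [|d IH]; first by rewrite addn0; lra.
rewrite addnS HS. have := pos_INR (n + d)%nat; rewrite S_INR => h.
have : 0 < / (INR (n+d)%nat + 1) by apply: Rinv_0_lt_compat; lra. lra. Qed.

Lemma ln_le_sub1 y : 0 < y -> ln y <= y - 1.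
Proof. move=> hy; have := exp_ineq1_le (ln y); rewrite exp_ln //; lra. Qed.

Lemma ln2_bounds : 0 < ln 2 < 1.
Proof. split; first by have := ln_lt_2; lra.
rewrite -{1}(ln_exp 1); apply: ln_increasing; first lra.
have := exp_ineq1 1; lra. Qed.

Lemma H_bound (k : nat) : H (k.+2) <= 2 * (log2 (INR k.+2 - 1) + 1).
Proof.
elim: k => [|k IH].
  rewrite /log2. have -> : INR 2 - 1 = 1 by rewrite /=; lra. rewrite ln_1. replace (H 2) with (3/2) by (rewrite /=; field). have [l0 _] := ln2_bounds. rewrite /Rdiv Rmult_0_l. lra.
rewrite HS.
have e1 : INR k.+3 - 1 = INR k.+2 by rewrite (S_INR k.+2); lra.
have e2 : INR k.+2 - 1 = INR k.+1 by rewrite (S_INR k.+1); lra.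
rewrite e2 in IH; rewrite e1.
have p1 := pos_INR k. rewrite !S_INR in IH *.
set a := INR k in IH p1 *.
have hl : / (a + 1 + 1) <= ln (a+1+1) - ln (a + 1).
  have h := ln_le_sub1 ((a+1)/(a+1+1)) ltac:(apply: Rdiv_lt_0_compat; lra).
  rewrite /Rdiv ln_mult in h; try lra; last by apply: Rinv_0_lt_compat; lra.
  rewrite ln_Rinv in h; last lra.
  have : (a + 1) * / (a + 1 + 1) - 1 = - / (a+1+1) by field; lra.
  lra.
have h3 : / (a+1+1+1) <= / (a+1+1) by apply: Rinv_le_contravar; lra.
have [l0 l1] := ln2_bounds.
have : 2 * (log2 (a + 1 + 1) + 1) - 2 * (log2 (a + 1) + 1) = 2 * (ln (a+1+1) - ln (a+1)) / ln 2.
  rewrite /log2; field; lra.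
have : (ln (a+1+1) - ln (a+1)) <= 2 * (ln (a+1+1) - ln (a+1)) / ln 2.
  apply (Rmult_le_reg_r (ln 2)) => //. rewrite /Rdiv Rmult_assoc Rinv_l; last lra.
  have : 0 <= ln (a+1+1) - ln (a+1). have : 0 < / (a+1+1) by apply: Rinv_0_lt_compat; lra. lra.
  nra.
lra.
Qed.

Lemma H_bound' (m : nat) : (2 <= m)%nat -> H m <= 2 * (log2 (INR m - 1) + 1).
Proof. case: m => [|[|k]] // _; exact: H_bound. Qed.

Lemma RplusA : associative Rplus. Proof. move=> x y z; ring. Qed.
HB.instance Definition _ := Monoid.isComLaw.Build R 0 Rplus RplusA Rplus_comm Rplus_0_l.

Definition leRb (x y : R) : bool := if Rle_dec x y then true else false.
Lemma leRbP x y : reflect (x <= y) (leRb x y).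
Proof. rewrite /leRb; case: Rle_dec => h; constructor => //. Qed.

Lemma seq_argmax (T : eqType) (f : T -> R) (s : seq T) (a : T) :
  exists2 x, x \in a :: s & forall y, y \in a :: s -> f y <= f x.
Proof.
elim: s a => [|b s IH] a.
  exists a; first by rewrite mem_seq1.
  move=> y; rewrite mem_seq1 => /eqP ->; lra.
have [x hx hmax] := IH b.
destruct (Rle_dec (f a) (f x)) as [h|h].
  exists x; first by rewrite in_cons hx orbT.
  move=> y; rewrite in_cons => /orP [/eqP -> //|]; exact: hmax.
exists a; first by rewrite in_cons eqxx.
move=> y; rewrite in_cons => /orP [/eqP ->|hy]; first lra.
have := hmax y hy; lra.
Qed.

Lemma fin_argmax (T : finType) (A : {set T}) (f : T -> R) :
  A != set0 -> exists2 x, x \in A & forall y, y \in A -> f y <= f x.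
Proof.
case/set0Pn => x0 hx0.
have : x0 \in enum A by rewrite mem_enum.
case E: (enum A) => [|a s] //= _.
have [x hx hmax] := seq_argmax _ f s a.
exists x; first by rewrite -mem_enum E.
move=> y hy; apply: hmax; by rewrite -E mem_enum.
Qed.

Lemma comb (m : nat) (w : 'I_m -> R) (hw : forall j, 0 <= w j) (M : R) (n : nat) :
  forall A : {set 'I_m}, #|A| = n ->
  (forall j, j \in A -> w j * INR #|[set i in A | leRb (w j) (w i)]| <= M) ->
  \big[Rplus/0]_(j in A) w j <= M * H n.
Proof.
elim: n => [|n IH] A hA hyp.
  move/cards0_eq: hA => ->; rewrite big_set0 /=; lra.
have hA0 : A != set0 by apply/eqP => E; rewrite E cards0 in hA.
have [j0 hj0 hmin] := fin_argmax _ _ (fun j => - w j) hA0.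
rewrite (big_setD1 j0 hj0).
have hA' : #|A :\ j0| = n.
  by move: hA; rewrite (cardsD1 j0) hj0 add1n => -[].
have h1 := IH (A :\ j0) hA'.
have h2 : \big[Rplus/0]_(j in A :\ j0) w j <= M * H n.
  apply: h1 => j hj.
  have hjA : j \in A by move: hj; rewrite in_setD1 => /andP[].
  apply: Rle_trans (hyp j hjA).
  apply: Rmult_le_compat_l; first exact: hw.
  apply: le_INR; apply/leP; apply: subset_leq_card.
  apply/subsetP => i; rewrite !inE => /andP [/andP [_ ->] ->]. by [].
have hs : [set i in A | leRb (w j0) (w i)] = A.
  apply/setP => i; rewrite inE; case hi: (i \in A) => //=.
  apply/leRbP; have := hmin i hi; lra.
have h3 := hyp j0 hj0; rewrite hs hA in h3.
rewrite HS.
have hpos : 0 < INR n.+1 by apply: lt_0_INR; apply/ltP.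
have h4 : w j0 <= M * / INR n.+1.
  apply (Rmult_le_reg_r (INR n.+1)) => //.
  rewrite Rmult_assoc Rinv_l; lra.
change (w j0 + \big[Rplus/0]_(i in A :\ j0) w i <= M * (H n + / INR n.+1)). rewrite Rmult_plus_distr_l. lra.
Qed.

Theorem mainTheorem12 (m : nat) (hm : (2 <= m)%nat) (v : valuation m)
  (hv : is_additive v) (S : {set 'I_m}) (hS : S != set0) :
  exists v' : valuation m, is_constraint_homogeneous v' /\
    2 * (log2 (INR m - 1) + 1) * v' S >= v S /\
    forall T : {set 'I_m}, v' T <= v T.
Proof.
case: hv => w [hw hvT].
pose c j := INR #|[set i in S | leRb (w j) (w i)]|.
have [js hjs hmax] := fin_argmax _ _ (fun j => w j * c j) hS.
pose S' := [set i in S | leRb (w js) (w i)].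
exists (fun T => w js * INR #|T :&: S'|).
split.
  exists S', (w js); split; [exact: hw | by []].
have hSS' : S :&: S' = S'.
  apply/setIidPr; apply/subsetP => i; rewrite inE => /andP[]. by [].
split.
  rewrite hSS' hvT.
  have hc := comb m w hw (w js * c js) #|S| S erefl hmax.
  have hHm : H #|S| <= H m.
    apply: H_mono. by have := max_card S; rewrite card_ord.
  have hB := H_bound' m hm.
  have hM : 0 <= w js * c js by apply: Rmult_le_pos; [exact: hw | exact: pos_INR].
  have hH0 := H_ge0 #|S|.
  change (c js) with (INR #|S'|) in hc. change (c js) with (INR #|S'|) in hM.
  apply: Rle_ge.
  apply: Rle_trans hc _.
  rewrite (Rmult_comm _ (w js * _)).
  apply: Rmult_le_compat_l => //. lra.
move=> T; rewrite hvT.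
have e1 : INR #|T :&: S'| = \big[Rplus/0]_(j in T :&: S') 1.
  rewrite -sum1_card. apply: (big_morph INR (fun x y => plus_INR x y) (erefl (INR 0))).
rewrite e1.
rewrite (big_morph (fun x => w js * x) (fun x y => Rmult_plus_distr_l (w js) x y) (Rmult_0_r (w js))).
rewrite big_mkcond [X in _ <= X]big_mkcond.
apply: (big_ind2 Rle); first lra.
  move=> x1 x2 y1 y2 h1 h2; change (x1 + y1 <= x2 + y2); lra.
move=> i _; rewrite inE.
case hT: (i \in T); case hi: (i \in S') => /=; try lra.
- move: hi; rewrite inE => /andP [_ /leRbP h]; lra.
- exact: hw.
Qed.
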